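(* Given a set of $n$ trajectories in $\mathbb{R}^1$, each piecewise linear with vertices at times $t_0,\dots,t_\tau$, a central trajectory with $\varepsilon=0$ has worst-case complexity $O(\tau n^2)$.
   Context: Setting: $\mathcal{X}$ is a set of $n$ entities moving in $\mathbb{R}^1$ along piecewise-linear trajectories with vertices at the common times $t_0<\dots<t_\tau$, in general position (no three trajectories pass through the same point at the same time). With $\varepsilon=0$, a trajectoid is a function $\mathcal{T}:[t_0,t_\tau]\to\mathcal{X}$ that may switch from $\sigma$ to $\psi$ at time $t$ only if $\sigma(t)=\psi(t)$. $D(\sigma,t)=\max_{\psi\in\mathcal{X}}|\sigma(t)-\psi(t)|$. A central trajectory is a trajectoid minimizing $\int_{t_0}^{t_\tau}D(\mathcal{T}(t),t)\,dt$. The complexity of a trajectoid is the number of pieces of the curve $t\mapsto\mathcal{T}(t)(t)$, i.e. the number of maximal time intervals on which $\mathcal{T}$ is a single entity and that entity moves linearly. *)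

(* Defs.v *)
From Stdlib Require Import Reals Lra List.
Import ListNotations.
Open Scope R_scope.

(* An instance: n entities indexed 0..n-1, entity i has position X i t at time t.
   Vertex times tm 0 < tm 1 < ... < tm tau. *)

Definition in_span (tm : nat -> R) (tau : nat) (t : R) : Prop :=
  tm 0%nat <= t <= tm tau.

Definition increasing_times (tm : nat -> R) (tau : nat) : Prop :=
  forall k, (k < tau)%nat -> tm k < tm (S k).

Definition piecewise_linear (tm : nat -> R) (tau n : nat) (X : nat -> R -> R) : Prop :=
  forall i k, (i < n)%nat -> (k < tau)%nat ->
    exists a b : R, forall t, tm k <= t <= tm (S k) -> X i t = a * t + b.

(* general position: no three trajectories meet at the same point at the same
   time, and two distinct trajectories meet only at finitely many times
   (in particular they never coincide on a time interval). *)
Definition general_position (tm : nat -> R) (tau n : nat) (X : nat -> R -> R) : Prop :=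
  (forall i j k t, (i < n)%nat -> (j < n)%nat -> (k < n)%nat ->
     i <> j -> j <> k -> i <> k -> in_span tm tau t ->
     ~ (X i t = X j t /\ X j t = X k t)) /\
  (forall i j, (i < n)%nat -> (j < n)%nat -> i <> j ->
     exists l : list R, forall t, in_span tm tau t -> X i t = X j t -> In t l).

Definition Dist (n : nat) (X : nat -> R -> R) (i : nat) (t : R) : R :=
  fold_right Rmax 0 (map (fun j => Rabs (X i t - X j t)) (seq 0 n)).

(* Trajectoid (epsilon = 0): T maps each time to an entity; it may switch from
   sigma to psi at time t only if sigma(t) = psi(t): every entity used by T at
   times close to t is, at time t, at the same position as T(t). *)
Definition trajectoid (tm : nat -> R) (tau n : nat) (X : nat -> R -> R)
    (T : R -> nat) : Prop :=
  (forall t, in_span tm tau t -> (T t < n)%nat) /\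
  (forall t, in_span tm tau t ->
     exists delta, delta > 0 /\
       forall s, in_span tm tau s -> Rabs (s - t) < delta ->
         X (T s) t = X (T t) t).

Definition cost_integrable (tm : nat -> R) (tau n : nat) (X : nat -> R -> R)
    (T : R -> nat) : Type :=
  Riemann_integrable (fun t => Dist n X (T t) t) (tm 0%nat) (tm tau).

Definition central (tm : nat -> R) (tau n : nat) (X : nat -> R -> R)
    (T : R -> nat) : Prop :=
  trajectoid tm tau n X T /\
  exists pr : cost_integrable tm tau n X T,
    forall T' (pr' : cost_integrable tm tau n X T'),
      trajectoid tm tau n X T' -> RiemannInt pr <= RiemannInt pr'.

Definition good_interval (tm : nat -> R) (tau : nat) (X : nat -> R -> R)
    (T : R -> nat) (I : R -> Prop) : Prop :=
  (exists t, I t) /\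
  (forall x y z, I x -> I y -> x <= z <= y -> I z) /\
  (forall t, I t -> in_span tm tau t) /\
  (exists (s : nat) (a b : R), forall t, I t -> T t = s /\ X s t = a * t + b).

Definition piece (tm : nat -> R) (tau : nat) (X : nat -> R -> R)
    (T : R -> nat) (I : R -> Prop) : Prop :=
  good_interval tm tau X T I /\
  forall J, good_interval tm tau X T J -> (forall t, I t -> J t) ->
    forall t, J t -> I t.

Definition complexity_le (tm : nat -> R) (tau : nat) (X : nat -> R -> R)
    (T : R -> nat) (m : R) : Prop :=
  forall L : list (R -> Prop),
    (forall I, In I L -> piece tm tau X T I) ->
    (forall i j, (i < length L)%nat -> (j < length L)%nat -> i <> j ->
       exists t, ~ (nth i L (fun _ => False) t <-> nth j L (fun _ => False) t)) ->
    INR (length L) <= m.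

(* Main.v *)
Require Import Defs.
From Stdlib Require Import Reals List Lra Lia Classical.
Import ListNotations.
Open Scope R_scope.

Lemma avoid : forall (l : list R) a b, a < b -> exists t, a <= t <= b /\ ~ In t l.
Proof.
  induction l as [|x l IHl]; intros a b Hab.
  - exists a; split; [lra | simpl; tauto].
  - destruct (Rle_dec x ((a+b)/2)).
    + destruct (IHl ((a+b)/2 + (b-a)/4) b) as [t [Ht Hn]]; [lra|].
      exists t; split; [lra|]. intros [H|H]; [lra | tauto].
    + destruct (IHl a ((a+b)/2)) as [t [Ht Hn]]; [lra|].
      exists t; split; [lra|]. intros [H|H]; [lra | tauto].
Qed.

Lemma tm_mono : forall tm tau, increasing_times tm tau ->
  forall p q, (p <= q)%nat -> (q <= tau)%nat -> tm p <= tm q.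
Proof.
  intros tm tau Hinc p q; induction q; intros Hpq Hq.
  - replace p with 0%nat by lia; lra.
  - destruct (Nat.eq_dec p (S q)) as [->|Hne]; [lra|].
    pose proof (Hinc q ltac:(lia)). pose proof (IHq ltac:(lia) ltac:(lia)). lra.
Qed.

Lemma find_interval : forall tm tau t, increasing_times tm tau -> (1 <= tau)%nat ->
  in_span tm tau t -> exists k, (k < tau)%nat /\ tm k <= t <= tm (S k).
Proof.
  intros tm tau t Hinc Htau [H0 H1].
  assert (aux : forall m, (1 <= m)%nat -> (m <= tau)%nat -> t <= tm m ->
     exists k, (k < m)%nat /\ tm k <= t <= tm (S k)).
  { induction m; intros Hm1 Hm2 Ht; [lia|].
    destruct m as [|m'].
    - exists 0%nat; split; [lia | lra].
    - destruct (Rle_dec t (tm (S m'))).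
      + destruct (IHm ltac:(lia) ltac:(lia) r) as [k [Hk Hk2]].
        exists k; split; [lia | lra].
      + exists (S m'); split; [lia | lra]. }
  apply aux; auto.
Qed.

Lemma gather (Q : nat -> R -> Prop) (c : nat) : forall N,
  (forall m, (m < N)%nat -> exists l, (length l <= c)%nat /\ forall t, Q m t -> In t l) ->
  exists l, (length l <= N * c)%nat /\ forall m t, (m < N)%nat -> Q m t -> In t l.
Proof.
  induction N; intros H.
  - exists nil; split; simpl; [lia | intros; lia].
  - destruct IHN as [l1 [H1 H2]]. { intros m Hm; apply H; lia. }
    destruct (H N) as [l2 [H3 H4]]; [lia|].
    exists (l2 ++ l1). split.
    + rewrite length_app; simpl; lia.
    + intros m t Hm HQ. apply in_or_app.
      destruct (Nat.eq_dec m N). { subst; left; auto. }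
      right; apply H2 with m; [lia|auto].
Qed.

Lemma lin2 : forall p q a1 b1 a b, p <> q -> a1 * p + b1 = a * p + b ->
  a1 * q + b1 = a * q + b -> a1 = a /\ b1 = b.
Proof.
  intros p q a1 b1 a b Hpq E1 E2.
  assert (a1 * (p - q) = a * (p - q)) by lra.
  assert (a1 = a). { apply Rmult_eq_reg_r with (p - q); auto. intro; apply Hpq; lra. }
  subst; split; lra.
Qed.

Lemma meet_once : forall tm tau n X, increasing_times tm tau ->
  piecewise_linear tm tau n X -> general_position tm tau n X ->
  forall i j k t1 t2, (i < n)%nat -> (j < n)%nat -> i <> j -> (k < tau)%nat ->
  tm k <= t1 <= tm (S k) -> tm k <= t2 <= tm (S k) ->
  X i t1 = X j t1 -> X i t2 = X j t2 -> t1 = t2.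
Proof.
  intros tm tau n X Hinc Hpl Hgp i j k t1 t2 Hi Hj Hij Hk H1 H2 E1 E2.
  destruct (Req_dec t1 t2) as [|Hne]; auto. exfalso.
  destruct (Hpl i k Hi Hk) as [a [b Hab]].
  destruct (Hpl j k Hj Hk) as [a' [b' Hab']].
  rewrite (Hab t1 H1), (Hab' t1 H1) in E1.
  rewrite (Hab t2 H2), (Hab' t2 H2) in E2.
  destruct (lin2 t1 t2 a b a' b' Hne E1 E2) as [-> ->].
  destruct (proj2 Hgp i j Hi Hj Hij) as [l Hl].
  destruct (avoid l (tm k) (tm (S k))) as [t [Ht Hnl]]; [apply Hinc; auto|].
  apply Hnl, Hl.
  - split.
    + pose proof (tm_mono tm tau Hinc 0 k ltac:(lia) ltac:(lia)); lra.
    + pose proof (tm_mono tm tau Hinc (S k) tau ltac:(lia) ltac:(lia)); lra.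
  - rewrite (Hab t Ht), (Hab' t Ht); reflexivity.
Qed.

Definition cond tm tau n (X : nat -> R -> R) k i j t :=
  (k < tau)%nat /\ (i < n)%nat /\ (j < n)%nat /\ i <> j /\ tm k <= t <= tm (S k) /\ X i t = X j t.

Lemma crossings : forall tm tau n X, increasing_times tm tau ->
  piecewise_linear tm tau n X -> general_position tm tau n X ->
  exists Bc, (length Bc <= tau * (n * (n * 1)))%nat /\
    forall k i j t, cond tm tau n X k i j t -> In t Bc.
Proof.
  intros tm tau n X Hinc Hpl Hgp.
  assert (Hone : forall k i j, exists l, (length l <= 1)%nat /\
     forall t, cond tm tau n X k i j t -> In t l).
  { intros k i j.
    destruct (classic (exists t, cond tm tau n X k i j t)) as [[t0 H0]|Hno].
    - exists [t0]; split; simpl; [lia|].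
      intros t Ht. left.
      destruct H0 as [? [? [? [? [? ?]]]]]. destruct Ht as [? [? [? [? [? ?]]]]].
      apply (meet_once tm tau n X Hinc Hpl Hgp i j k); auto.
    - exists []; split; simpl; [lia|]. intros t Ht; apply Hno; eauto. }
  assert (Hki : forall k i, exists l, (length l <= n * 1)%nat /\
     forall j t, (j < n)%nat -> cond tm tau n X k i j t -> In t l).
  { intros k i. apply gather. intros; apply Hone. }
  assert (Hk : forall k, exists l, (length l <= n * (n * 1))%nat /\
     forall i t, (i < n)%nat -> (exists j, (j < n)%nat /\ cond tm tau n X k i j t) -> In t l).
  { intros k. apply gather. intros i Hi. destruct (Hki k i) as [l [H1 H2]].
    exists l; split; auto. intros t [j [Hj Hc]]; eauto. }
  destruct (gather (fun k t => exists i, (i < n)%nat /\ exists j, (j < n)%nat /\ cond tm tau n X k i j t)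
              (n * (n * 1)) tau) as [Bc [H1 H2]].
  { intros k Hk'. destruct (Hk k) as [l [H1 H2]]. exists l; split; auto.
    intros t [i [Hi Hj]]; eauto. }
  exists Bc; split; auto.
  intros k i j t Hc. pose proof Hc as [? [? [? _]]].
  apply H2 with k; auto. exists i; split; auto; exists j; split; auto.
Qed.

Lemma connect (f : R -> nat) a b : a <= b ->
  (forall x, a <= x <= b -> exists d, d > 0 /\
     forall y, a <= y <= b -> Rabs (y - x) < d -> f y = f x) ->
  forall z, a <= z <= b -> f z = f a.
Proof.
  intros Hab Hloc.
  set (E := fun x => a <= x <= b /\ forall y, a <= y <= x -> f y = f a).
  assert (HEa : E a). { split; [lra|]. intros y Hy; replace y with a by lra; auto. }
  destruct (completeness E) as [c [Hub Hlub]].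
  { exists b; intros x [Hx _]; lra. }
  { exists a; auto. }
  assert (Hac : a <= c) by (apply Hub; auto).
  assert (Hcb : c <= b) by (apply Hlub; intros x [Hx _]; lra).
  assert (Hbelow : forall y, a <= y < c -> f y = f a).
  { intros y Hy. destruct (classic (exists x, E x /\ y <= x)) as [[x [[_ Hx] Hyx]]|Hno].
    - apply Hx; lra.
    - exfalso. assert (c <= y); [|lra]. apply Hlub. intros x Hx.
      destruct (Rle_dec x y); auto. exfalso; apply Hno; exists x; split; auto; lra. }
  destruct (Hloc c ltac:(lra)) as [d [Hd Hdc]].
  assert (Hc : f c = f a).
  { destruct (Req_dec c a) as [->|Hne]; auto.
    set (y := Rmax a (c - d/2)).
    assert (a <= y < c) by (unfold y; unfold Rmax; destruct Rle_dec; lra).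
    rewrite <- (Hbelow y); auto. symmetry; apply Hdc; [lra|].
    apply Rabs_def1; unfold y, Rmax; destruct Rle_dec; lra. }
  assert (Hall : forall y, a <= y <= c -> f y = f a).
  { intros y Hy. destruct (Req_dec y c) as [->|]; auto. apply Hbelow; lra. }
  assert (c = b).
  { destruct (Req_dec c b); auto. exfalso.
    set (z := Rmin b (c + d/2)).
    assert (c < z <= b) by (unfold z, Rmin; destruct Rle_dec; lra).
    assert (E z).
    { split; [lra|]. intros y Hy. destruct (Rle_dec y c); [apply Hall; lra|].
      rewrite <- Hc. apply Hdc; [lra|]. apply Rabs_def1; unfold z, Rmin in *; destruct Rle_dec; lra. }
    pose proof (Hub z H1). lra. }
  subst c. intros z Hz; apply Hall; lra.
Qed.

Lemma loc : forall tm tau n X T (B : list R), trajectoid tm tau n X T ->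
  (forall i j t, (i < n)%nat -> (j < n)%nat -> i <> j -> in_span tm tau t ->
     X i t = X j t -> In t B) ->
  forall t, in_span tm tau t -> ~ In t B -> exists d, d > 0 /\
     forall s, in_span tm tau s -> Rabs (s - t) < d -> T s = T t.
Proof.
  intros tm tau n X T B [Hlt Hloc] HB t Ht Hnb.
  destruct (Hloc t Ht) as [d [Hd Hs]]. exists d; split; auto.
  intros s Hs' Hst. destruct (Nat.eq_dec (T s) (T t)); auto. exfalso.
  apply Hnb. apply HB with (T s) (T t); auto.
Qed.

Lemma piece_lin : forall tm tau X T I k p s a b,
  good_interval tm tau X T I -> I p -> tm k < p < tm (S k) -> T p = s ->
  (forall z, tm k <= z <= tm (S k) -> X s z = a * z + b) ->
  forall z, I z -> T z = s /\ X s z = a * z + b.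
Proof.
  intros tm tau X T I k p s a b [_ [Hconv [Hspan [s1 [a1 [b1 Hl]]]]]] Hp Hpk HTp Hlin z Hz.
  destruct (Hl p Hp) as [Ts1 _]. assert (Hs1 : s1 = s) by congruence. rewrite Hs1 in Hl. clear Ts1.
  destruct (Hl z Hz) as [Tz Xz]. split; [congruence|].
  destruct (Rle_dec z (tm (S k))), (Rle_dec (tm k) z).
  - apply Hlin; lra.
  - assert (Ik : I (tm k)) by (apply Hconv with z p; auto; lra).
    destruct (Hl _ Ik) as [_ E1]. destruct (Hl _ Hp) as [_ E2].
    rewrite Hlin in E1 by lra. rewrite Hlin in E2 by lra.
    destruct (lin2 (tm k) p a b a1 b1) as [-> ->]; auto; lra.
  - assert (Ik : I (tm (S k))) by (apply Hconv with p z; auto; lra).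
    destruct (Hl _ Ik) as [_ E1]. destruct (Hl _ Hp) as [_ E2].
    rewrite Hlin in E1 by lra. rewrite Hlin in E2 by lra.
    destruct (lin2 (tm (S k)) p a b a1 b1) as [-> ->]; auto; lra.
  - lra.
Qed.

Lemma union_convex : forall (A B : R -> Prop) p,
  (forall x y z, A x -> A y -> x <= z <= y -> A z) ->
  (forall x y z, B x -> B y -> x <= z <= y -> B z) ->
  A p -> B p ->
  forall x y z, (A x \/ B x) -> (A y \/ B y) -> x <= z <= y -> A z \/ B z.
Proof.
  intros A B p HA HB Ap Bp x y z [Ax|Bx] [Ay|By] Hz.
  - left; eauto.
  - destruct (Rle_dec z p); [left; apply HA with x p | right; apply HB with p y]; auto; lra.
  - destruct (Rle_dec z p); [right; apply HB with x p | left; apply HA with p y]; auto; lra.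
  - right; eauto.
Qed.

Lemma same_label : forall tm tau n X T (B : list R),
  (1 <= tau)%nat -> increasing_times tm tau -> piecewise_linear tm tau n X ->
  trajectoid tm tau n X T ->
  (forall p, (p <= tau)%nat -> In (tm p) B) ->
  (forall i j t, (i < n)%nat -> (j < n)%nat -> i <> j -> in_span tm tau t ->
     X i t = X j t -> In t B) ->
  forall I J t t', piece tm tau X T I -> piece tm tau X T J -> I t -> J t' -> t <= t' ->
  ~ In t B -> ~ In t' B -> (forall c, In c B -> t <= c <= t' -> False) ->
  forall z, I z <-> J z.
Proof.
  intros tm tau n X T B Htau Hinc Hpl Htr HBtm HB I J t t' HpI HpJ It Jt' Htt' HtB Ht'B noB.
  assert (Hst : in_span tm tau t) by (apply (proj1 (proj2 (proj2 (proj1 HpI)))); auto).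
  assert (Hst' : in_span tm tau t') by (apply (proj1 (proj2 (proj2 (proj1 HpJ)))); auto).
  assert (Hconst : forall z, t <= z <= t' -> T z = T t).
  { apply connect; auto. intros x Hx.
    assert (Hsx : in_span tm tau x) by (unfold in_span in *; lra).
    destruct (loc tm tau n X T B Htr HB x Hsx) as [d [Hd Hdd]].
    { intro Hx'. apply (noB x Hx' Hx). }
    exists d; split; auto. intros y Hy Hyx. apply Hdd; auto. unfold in_span in *; lra. }
  destruct (find_interval tm tau t Hinc Htau Hst) as [k [Hk Htk]].
  assert (Hk1 : tm k <> t). { intro E. apply HtB. rewrite <- E. apply HBtm; lia. }
  assert (Hk2 : t' < tm (S k)).
  { destruct (Rle_dec t' (tm (S k))).
    - destruct (Req_dec t' (tm (S k))) as [E|]; [|lra]. exfalso; apply Ht'B; rewrite E; apply HBtm; lia.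
    - exfalso. apply (noB (tm (S k))); [apply HBtm; lia | lra]. }
  set (s := T t).
  assert (Hs : (s < n)%nat) by (apply (proj1 Htr); auto).
  destruct (Hpl s k Hs Hk) as [a [b Hlin]].
  assert (HI' := piece_lin tm tau X T I k t s a b (proj1 HpI) It ltac:(lra) eq_refl Hlin).
  assert (HJ' := piece_lin tm tau X T J k t' s a b (proj1 HpJ) Jt' ltac:(lra)
                   (Hconst t' ltac:(lra)) Hlin).
  set (K := fun z => (I z \/ t <= z <= t') \/ J z).
  assert (HK : good_interval tm tau X T K).
  { destruct HpI as [[_ [CI [SI _]]] _]. destruct HpJ as [[_ [CJ [SJ _]]] _].
    split; [exists t; left; left; auto|].
    split.
    { intros x y z Hx Hy Hz.
      refine (union_convex (fun z => I z \/ t <= z <= t') J t' _ CJ _ Jt' x y z Hx Hy Hz).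
      - intros x0 y0 z0 Hx0 Hy0 Hz0.
        refine (union_convex I (fun z => t <= z <= t') t CI _ It _ x0 y0 z0 Hx0 Hy0 Hz0).
        + intros; lra.
        + lra.
      - right; lra. }
    split.
    { intros z [[Hz|Hz]|Hz]; auto. unfold in_span in *; lra. }
    exists s, a, b. intros z [[Hz|Hz]|Hz]; auto.
    split; [apply Hconst; auto|]. apply Hlin; lra. }
  destruct HpI as [_ HmI]. destruct HpJ as [_ HmJ].
  assert (A1 := HmI K HK (fun z Hz => or_introl (or_introl Hz))).
  assert (A2 := HmJ K HK (fun z Hz => or_intror Hz)).
  intros z; split; intros Hz.
  - apply A2. left; left; auto.
  - apply A1. right; auto.
Qed.

Lemma singleton : forall tm tau X T (B : list R) I t0,
  good_interval tm tau X T I -> (forall z, I z -> In z B) -> I t0 ->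
  forall y, I y -> y = t0.
Proof.
  intros tm tau X T B I t0 [_ [Hconv _]] HIB H0 y Hy.
  destruct (Req_dec y t0) as [|Hne]; auto. exfalso.
  destruct (Rle_dec y t0).
  - destruct (avoid B y t0) as [z [Hz Hn]]; [lra|]. apply Hn, HIB, Hconv with y t0; auto.
  - destruct (avoid B t0 y) as [z [Hz Hn]]; [lra|]. apply Hn, HIB, Hconv with t0 y; auto; lra.
Qed.

Lemma maxbelow : forall (l : list R) t, (exists c, In c l /\ c < t) ->
  exists x, In x l /\ x < t /\ forall c, In c l -> c < t -> c <= x.
Proof.
  induction l as [|a l IH]; intros t [c [Hc Hct]]; [destruct Hc|].
  destruct (classic (exists c, In c l /\ c < t)) as [Hex|Hno].
  - destruct (IH t Hex) as [x [Hx [Hxt Hmax]]].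
    destruct (Rlt_dec a t); [destruct (Rlt_dec x a)|].
    + exists a; split; [left; auto|]; split; auto. intros c0 [<-|Hc0] Hc0t; [lra|].
      pose proof (Hmax c0 Hc0 Hc0t); lra.
    + exists x; split; [right; auto|]; split; auto. intros c0 [<-|Hc0] Hc0t; [lra|auto].
    + exists x; split; [right; auto|]; split; auto. intros c0 [<-|Hc0] Hc0t; [lra|auto].
  - destruct Hc as [<-|Hc]; [|exfalso; apply Hno; eauto].
    exists a; split; [left; auto|]; split; auto. intros c0 [<-|Hc0] Hc0t; [lra|].
    exfalso; apply Hno; eauto.
Qed.

Definition pdec : forall x y : R * bool, {x = y} + {x <> y}.
Proof. decide equality; [apply Bool.bool_dec | apply Req_dec_T]. Defined.

Lemma count_labels (P : (R -> Prop) -> R * bool -> Prop) : forall (L : list (R -> Prop)) (K : list (R * bool)),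
  (forall I, In I L -> exists b, In b K /\ P I b) ->
  (forall i j, (i < length L)%nat -> (j < length L)%nat -> i <> j -> forall b,
     P (nth i L (fun _ => False)) b -> P (nth j L (fun _ => False)) b -> False) ->
  (length L <= length K)%nat.
Proof.
  induction L as [|I L IH]; intros K Hex Hdis; [simpl; lia|].
  destruct (Hex I (or_introl eq_refl)) as [b [Hb HPb]].
  assert ((length L <= length (remove pdec b K))%nat).
  { apply IH.
    - intros J HJ. destruct (Hex J (or_intror HJ)) as [b' [Hb' HP']]. exists b'. split; auto.
      apply in_in_remove; auto. intro Heq; subst b'.
      destruct (In_nth L J (fun _ => False) HJ) as [j [Hj Hnth]].
      apply (Hdis 0%nat (S j)) with b; simpl; try lia; auto. rewrite Hnth; auto.
    - intros i j Hi Hj Hij b0 H1 H2. apply (Hdis (S i) (S j)) with b0; simpl; try lia; auto. }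
  pose proof (remove_length_lt pdec K b Hb). simpl; lia.
Qed.

Definition lab (B : list R) (I : R -> Prop) (p : R * bool) : Prop :=
  match p with
  | (x, true) => I x /\ forall y, I y -> y = x
  | (x, false) => exists t, I t /\ ~ In t B /\ In x B /\ x < t /\
                    forall c, In c B -> c < t -> c <= x
  end.

Theorem mainTheorem17 :
  exists C : R,
    forall (n tau : nat) (tm : nat -> R) (X : nat -> R -> R),
      (1 <= tau)%nat ->
      increasing_times tm tau ->
      piecewise_linear tm tau n X ->
      general_position tm tau n X ->
      forall T : R -> nat,
        central tm tau n X T ->
        complexity_le tm tau X T (C * INR tau * INR n ^ 2).
Proof.
  exists 6. intros n tau tm X Htau Hinc Hpl Hgp T [Htr _] L Hpieces Hdist.
  assert (Hsp0 : in_span tm tau (tm 0%nat)).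
  { split; [lra|]. apply (tm_mono tm tau Hinc); lia. }
  destruct (Nat.eq_dec n 0) as [->|Hn].
  { exfalso. pose proof (proj1 Htr _ Hsp0). lia. }
  destruct (crossings tm tau n X Hinc Hpl Hgp) as [Bc [HBc HBcc]].
  set (B := map tm (seq 0 (S tau)) ++ Bc).
  assert (HBtm : forall p, (p <= tau)%nat -> In (tm p) B).
  { intros p Hp. apply in_or_app; left. apply in_map. apply in_seq. lia. }
  assert (HB : forall i j t, (i < n)%nat -> (j < n)%nat -> i <> j -> in_span tm tau t ->
     X i t = X j t -> In t B).
  { intros i j t Hi Hj Hij Ht E. destruct (find_interval tm tau t Hinc Htau Ht) as [k [Hk Htk]].
    apply in_or_app; right. apply (HBcc k i j t). repeat split; auto; lra. }
  set (K := map (fun x => (x, true)) B ++ map (fun x => (x, false)) B).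
  assert (Hlen : (length L <= length K)%nat).
  { apply (count_labels (fun I p => piece tm tau X T I /\ lab B I p)).
    - intros I HI. pose proof (Hpieces I HI) as HpI.
      destruct (classic (exists t, I t /\ ~ In t B)) as [[t [HIt HtB]]|Hno].
      + assert (Hst : in_span tm tau t) by (apply (proj1 (proj2 (proj2 (proj1 HpI)))); auto).
        destruct (maxbelow B t) as [x [HxB [Hxt Hmax]]].
        { exists (tm 0%nat); split; [apply HBtm; lia|].
          destruct Hst as [Hst _]. destruct (Req_dec (tm 0%nat) t) as [E|]; [|lra].
          exfalso; apply HtB; rewrite <- E; apply HBtm; lia. }
        exists (x, false). split.
        * apply in_or_app; right. apply (in_map (fun x => (x, false))); auto.
        * split; auto. simpl. exists t; repeat split; auto.
      + destruct (proj1 (proj1 HpI)) as [t0 Ht0].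
        assert (HIB : forall z, I z -> In z B).
        { intros z Hz. apply NNPP. intro Hn'. apply Hno; eauto. }
        exists (t0, true). split.
        * apply in_or_app; left. apply (in_map (fun x => (x, true))).
          apply HIB; auto.
        * split; auto. simpl. split; auto. eapply singleton; eauto. exact (proj1 HpI).
    - intros i j Hi Hj Hij [x bt] [HpI HlI] [HpJ HlJ].
      destruct (Hdist i j Hi Hj Hij) as [z Hz]. apply Hz.
      set (I := nth i L (fun _ => False)) in *.
      set (J := nth j L (fun _ => False)) in *.
      destruct bt; simpl in HlI, HlJ.
      + destruct HlI as [Ix HIs]. destruct HlJ as [Jx HJs].
        split; intros Hzz; [rewrite (HIs z Hzz); auto | rewrite (HJs z Hzz); auto].
      + destruct HlI as [t [It [tB [xB [xt xmax]]]]].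
        destruct HlJ as [t' [Jt' [t'B [_ [xt' xmax']]]]].
        destruct (Rle_dec t t').
        * apply (same_label tm tau n X T B Htau Hinc Hpl Htr HBtm HB I J t t'); auto.
          intros c Hc Hct.
          destruct (Req_dec c t) as [->|]; [auto|].
          destruct (Req_dec c t') as [->|]; [auto|].
          destruct (Rle_lt_or_eq_dec c t' (proj2 Hct)) as [Hlt|Heq]; [|contradiction].
          pose proof (xmax' c Hc Hlt). lra.
        * apply iff_sym.
          apply (same_label tm tau n X T B Htau Hinc Hpl Htr HBtm HB J I t' t); auto; [lra|].
          intros c Hc Hct.
          destruct (Req_dec c t) as [->|]; [auto|].
          destruct (Req_dec c t') as [->|]; [auto|].
          destruct (Rle_lt_or_eq_dec c t (proj2 Hct)) as [Hlt|Heq]; [|contradiction].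
          pose proof (xmax c Hc Hlt). lra. }
  assert (HK : (length K = 2 * (S tau + length Bc))%nat).
  { unfold K, B. rewrite length_app, !length_map, length_app, length_map, length_seq. lia. }
  assert (Hnat : (length L <= 6 * tau * (n * n))%nat).
  { assert (H1 : (1 <= n * n)%nat) by nia.
    assert (H2 : (tau <= tau * (n * n))%nat) by nia.
    replace (n * (n * 1))%nat with (n * n)%nat in HBc by lia.
    set (m := (tau * (n * n))%nat) in *. replace (6 * tau * (n * n))%nat with (6 * m)%nat by (unfold m; lia).
    lia. }
  apply le_INR in Hnat. eapply Rle_trans; [exact Hnat|].
  rewrite !mult_INR. replace (INR 6) with 6 by (simpl; lra). simpl. lra.
Qed.
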